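(* Let $X$ be a topological space, let $S\subseteq X$ be an $\alpha$-scaffold and let $\mathcal A$ be a cover of $S_{[0]}$. Then either there is $A_S\in\mathcal A$ such that $\mathrm{cor}\,S\in\overline{A_S\cap S_{[0]}}$, or there exists a countable family $\mathcal A_S\subseteq[\mathcal A]^\omega$ such that every $\mathcal A'\subseteq\mathcal A$ with $|\mathcal A'\cap\mathcal A''|=\omega$ for every $\mathcal A''\in\mathcal A_S$ satisfies $\mathrm{cor}\,S\in\overline{\bigcup\{S_{[0]}\cap B: B\in\mathcal A'\}}$.
   Context: Scaffolds in a space $X$ are defined by recursion. A pair $(S,\mathcal S)$ with $S\subseteq X$, $\mathcal S\subseteq 2^S$ is: (S.0) a $0$-scaffold if $S=\{x\}$, $\mathcal S=\{S\}$; then $\mathrm{ht}(S)=\mathrm{ht}_S(x)=0$ and $\mathrm{cor}\,S=x$. (S.1) an $\alpha$-scaffold if there are $x\in S$, pairwise disjoint open sets $U_n\subseteq X$, and $\alpha_n$-scaffolds $(S_n,\mathcal S_n)$ $(n\in\omega)$ with $(\alpha_n)$ nondecreasing, $\alpha=\min\{\beta:\beta>\alpha_n\text{ for all }n\}$, $\mathrm{cor}\,S_n\to x$, $\overline{S_n}\subseteq U_n$, $x\notin\overline{U_n}$, $S=\{x\}\cup\bigcup_nS_n$, $\mathcal S=\{S\}\cup\bigcup_n\mathcal S_n$; then $\mathrm{ht}(S)=\mathrm{ht}_S(x)=\alpha$, $\mathrm{ht}_S(x')=\mathrm{ht}_{S_n}(x')$ for $x'\in S_n$, and $\mathrm{cor}\,S=x$.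 A set $S\subseteq X$ is an $\alpha$-scaffold if such a stratification $\mathcal S$ exists; $\mathrm{cor}\,S$ and $\mathrm{ht}_S$ do not depend on its choice. $S_{[0]}=\{s\in S:\mathrm{ht}_S(s)=0\}$. $[\mathcal A]^\omega$ denotes the set of countably infinite subsets of $\mathcal A$. *)

(* Defs.v *)
From HB Require Import structures.
From mathcomp Require Import all_boot all_order all_algebra.
From mathcomp Require Import all_classical all_reals topology.
Set Implicit Arguments. Unset Strict Implicit. Unset Printing Implicit Defensive.
Import Order.TTheory.
Local Open Scope classical_set_scope.

(* Ordinal heights are taken in an arbitrary well-ordered type O (a totally
   ordered type whose strict order is well founded).  
   [scaffold O a S c Z] : S is an a-scaffold of X (w.r.t. some stratification)
   with ht(S) = a, cor S = c and S_[0] = Z. *)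
Inductive scaffold {X : topologicalType} {d : Order.disp_t} (O : orderType d)
  : O -> set X -> X -> set X -> Prop :=
| scaffold0 (a : O) (x : X) :
    (forall b : O, (a <= b)%O) ->
    scaffold a [set x] x [set x]
| scaffoldS (a : O) (x : X) (U : nat -> set X) (Sn : nat -> set X)
    (cn : nat -> X) (Zn : nat -> set X) (an : nat -> O) :
    (forall n, scaffold (an n) (Sn n) (cn n) (Zn n)) ->
    (forall n, (an n <= an n.+1)%O) ->
    (forall n, (an n < a)%O) ->
    (forall b : O, (forall n, (an n < b)%O) -> (a <= b)%O) ->
    cn @ \oo --> x ->
    (forall n, open (U n)) ->
    (forall n m, n <> m -> U n `&` U m = set0) ->
    (forall n, closure (Sn n) `<=` U n) ->
    (forall n, ~ closure (U n) x) ->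
    scaffold a (x |` \bigcup_n Sn n) x (\bigcup_n Zn n).

(* Main.v *)
Require Import Defs.
From HB Require Import structures.
From mathcomp Require Import all_boot all_order all_algebra.
From mathcomp Require Import all_classical all_reals topology.
Import Order.TTheory.
Local Open Scope classical_set_scope.


Lemma freq_closure (X : topologicalType) (cn : nat -> X) x (C : set X) :
  cn @ \oo --> x -> (forall N, exists n, (N <= n)%N /\ closure C (cn n)) -> closure C x.
Proof.
move=> cv fr W; rewrite nbhsE => -[B [oB Bx] BW].
have : (cn @ \oo) B by apply: cv; apply: open_nbhs_nbhs; split.
case=> N _ HN.
have [n [Nn cln]] := fr N.
have [y [Cy By]] := cln B (open_nbhs_nbhs (conj oB (HN n Nn))).
by exists y; split => //; exact: BW.
Qed.

Fixpoint hseq (N0 : nat) (F : nat -> nat) k :=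
  if k is k'.+1 then maxn (hseq N0 F k').+1 (F (hseq N0 F k')) else N0.

Lemma hseqS N0 F k : (hseq N0 F k < hseq N0 F k.+1)%N /\ (F (hseq N0 F k) <= hseq N0 F k.+1)%N.
Proof. by rewrite /= leq_maxl leq_maxr. Qed.

Lemma hseq_mono N0 F j k : (j <= k)%N -> (hseq N0 F j <= hseq N0 F k)%N.
Proof.
elim: k => [|k IH]; first by rewrite leqn0 => /eqP ->.
rewrite leq_eqVlt => /orP [/eqP -> //|jk].
by apply: leq_trans (IH jk) (ltnW (hseqS N0 F k).1).
Qed.

Lemma hseq_ge N0 F k : (N0 <= hseq N0 F k)%N /\ (k <= hseq N0 F k)%N.
Proof.
elim: k => [|k [IH1 IH2]] //=; split.
  by apply: leq_trans (leq_maxl _ _); apply: leq_trans IH1 _.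
by apply: leq_trans (leq_maxl _ _).
Qed.


Lemma main (X : topologicalType) (d : Order.disp_t) (O : orderType d)
  (a : O) (S : set X) (c : X) (Z : set X)
  (hS : @scaffold X d O a S c Z) :
  forall (A : set (set X)) (hA : Z `<=` \bigcup_(B in A) B),
  (exists2 AS, A AS & closure (AS `&` Z) c) \/
  (exists AAS : set (set (set X)),
     countable AAS /\
     (forall B, AAS B -> B `<=` A /\ (B #= [set: nat])%card) /\
     (forall A' : set (set X), A' `<=` A ->
        (forall B, AAS B -> ((A' `&` B) #= [set: nat])%card) ->
        closure (\bigcup_(B in A') (Z `&` B)) c)).
Proof.
elim: hS => {a S c Z}.
  move=> a x _ A hA; left.
  have [B AB Bx] := hA x erefl.
  by exists B => //; apply: subset_closure.
move=> a x U Sn cn Zn an _ IH _ _ _ cv _ _ _ _ A hA.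
have IH' n := IH n A (subset_trans (fun y Zy => ex_intro2 _ _ n I Zy) hA).
have [caseA|nA] := pselect (exists B, A B /\ forall N, exists n, (N <= n)%N /\
   closure (B `&` Zn n) (cn n)).
  left; have [B [AB fr]] := caseA; exists B => //.
  apply: freq_closure cv _ => N; have [n [Nn cl]] := fr N; exists n; split => //.
  by apply: closureS cl => y [By Zy]; split => //; exists n.
pose R n := exists AAS : set (set (set X)),
     countable AAS /\
     (forall B, AAS B -> B `<=` A /\ (B #= [set: nat])%card) /\
     (forall A' : set (set X), A' `<=` A ->
        (forall B, AAS B -> ((A' `&` B) #= [set: nat])%card) ->
        closure (\bigcup_(B in A') (Zn n `&` B)) (cn n)).
have [caseB|nB] := pselect (forall N, exists n, (N <= n)%N /\ R n).
  right.
  have /choice [f hf] : forall n, exists F : set (set (set X)),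
     (R n -> countable F /\
     (forall B, F B -> B `<=` A /\ (B #= [set: nat])%card) /\
     (forall A' : set (set X), A' `<=` A ->
        (forall B, F B -> ((A' `&` B) #= [set: nat])%card) ->
        closure (\bigcup_(B in A') (Zn n `&` B)) (cn n))) /\ (~ R n -> F = set0).
    move=> n; have [[F hF]|nR] := pselect (R n).
      by exists F; split => [_|nR] //; case: nR; exists F.
    by exists set0; split => // /nR.
  exists (\bigcup_(n in setT) f n); split; [|split].
  - apply: bigcup_countable; first exact: card_lexx.
    move=> n _; have [Rn|nR] := pselect (R n); first by case: ((hf n).1 Rn).
    by rewrite ((hf n).2 nR); exact: countable0.
  - move=> B [n _ fnB]; have [Rn|nR] := pselect (R n); first by apply: ((hf n).1 Rn).2.1.
    by move: fnB; rewrite ((hf n).2 nR).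
  - move=> A' A'A hA'.
    apply: freq_closure cv _ => N; have [n [Nn Rn]] := caseB N; exists n; split => //.
    have := (((hf n).1 Rn).2.2 A' A'A (fun B fB => hA' B (ex_intro2 _ _ n I fB))).
    apply: closureS => y [B A'B [Zy By]]; exists B => //; split => //; by exists n.
have [N0 hN0] : exists N0, forall n, (N0 <= n)%N -> ~ R n.
  apply: contrapT => H; apply: nB => N; apply: contrapT => H2; apply: H.
  by exists N => n Nn Rn; apply: H2; exists n.
have /choice [g hg] : forall n, exists B, (N0 <= n)%N -> A B /\ closure (B `&` Zn n) (cn n).
  move=> n; have [Nn|nN] := pselect (N0 <= n)%N; last by exists setT.
  case: (IH' n) => [[B AB cl]|Rn]; first by exists B.
  by case: (hN0 n Nn Rn).
have /choice [M hM] : forall B, exists m, A B -> forall n, (m <= n)%N ->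
    ~ closure (B `&` Zn n) (cn n).
  move=> B; apply: contrapT => H; apply: nA; exists B; split.
    by apply: contrapT => nAB; apply: H; exists 0%N.
  move=> N; apply: contrapT => H2; apply: H; exists N => _ n Nn cl; apply: H2.
  by exists n.
pose h := hseq N0 (fun k => M (g k)).
have ghinj : injective (fun k => g (h k)).
  have key : forall j k, (j < k)%N -> g (h j) <> g (h k).
    move=> j k jk eq.
    have [Agk clk] := hg (h k) (hseq_ge N0 _ k).1.
    apply: (hM _ Agk (h k)) clk.
    rewrite -eq; have := (hseqS N0 (fun k => M (g k)) j).2 => H.
    apply: leq_trans H _.
    exact: (hseq_mono N0 _ _ _ jk).
  move=> j k /= eq; case: (ltngtP j k) => // jk.
    by case: (key _ _ jk eq).
  by case: (key _ _ jk (esym eq)).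
right; exists [set range (fun k => g (h k))]; split; [|split].
- exact: countable1.
- move=> B ->; split.
    by move=> _ [k _ <-]; exact: (hg (h k) (hseq_ge N0 _ k).1).1.
  by apply: inj_card_eq => i j _ _; apply: ghinj.
- move=> A' A'A hA'.
  have infI : infinite_set (A' `&` range (fun k => g (h k))).
    by rewrite (eq_finite_set (hA' _ erefl)); exact: infinite_nat.
  have infK : infinite_set [set k | A' (g (h k))].
    move=> finK; apply: infI; apply: sub_finite_set (finite_image (fun k => g (h k)) finK).
    move=> B [A'B [k _ ekB]]; exists k => //; by rewrite /= ekB.
  apply: freq_closure cv _ => N.
  have [k [Kk Nk]] : exists k, A' (g (h k)) /\ (N <= k)%N.
    apply: contrapT => H; apply: infK; apply: sub_finite_set (finite_II N) => k Kk /=.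
    by rewrite ltnNge; apply/negP => Nk; apply: H; exists k.
  exists (h k); split; first exact: leq_trans Nk (hseq_ge N0 _ k).2.
  have [_ cl] := hg (h k) (hseq_ge N0 _ k).1.
  apply: closureS cl => y [gy Zy]; exists (g (h k)) => //; split => //; by exists (h k).
Qed.

Theorem lemma13 (X : topologicalType) (d : Order.disp_t) (O : orderType d)
  (wfO : well_founded (fun a b : O => (a < b)%O))
  (a : O) (S : set X) (c : X) (Z : set X)
  (hS : @scaffold X d O a S c Z)
  (A : set (set X)) (hA : Z `<=` \bigcup_(B in A) B) :
  (exists2 AS, A AS & closure (AS `&` Z) c) \/
  (exists AAS : set (set (set X)),
     countable AAS /\
     (forall B, AAS B -> B `<=` A /\ (B #= [set: nat])%card) /\
     (forall A' : set (set X), A' `<=` A ->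
        (forall B, AAS B -> ((A' `&` B) #= [set: nat])%card) ->
        closure (\bigcup_(B in A') (Z `&` B)) c)).
Proof. exact: (@main X d O a S c Z hS A hA). Qed.
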